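(* Write $\forall^*x\,\phi$ for $\sim\exists x\sim\phi$ and $\phi\to^*\psi$ for $\sim(\phi\wedge\sim\psi)$. Let $\bar x=(x_1,\dots,x_n)$, let $\bar y$ be a tuple of fresh variables, let $\psi(\bar x,\bar y)$ be an $\mathrm{FO}(\perp\!\!\!\perp_c,\sim)$-formula, and set $\phi_\exists:=\exists\bar y(\bar x\perp\!\!\!\perp\bar y\wedge\psi(\bar x,\bar y))$ and $\phi_\forall:=\forall^*\bar y(\bar x\perp\!\!\!\perp\bar y\to^*\psi(\bar x,\bar y))$. Then for every finite structure $\mathcal A$ and every probabilistic team $\mathbb X$ over $\{x_1,\dots,x_n\}$: (i) $\mathcal A\models_{\mathbb X}\phi_\exists$ iff $\mathcal A\models_{\mathbb X(d/\bar y)}\psi$ for some probability distribution $d\colon A^{|\bar y|}\to[0,1]$; (ii) $\mathcal A\models_{\mathbb X}\phi_\forall$ iff $\mathcal A\models_{\mathbb X(d/\bar y)}\psi$ for all probability distributions $d\colon A^{|\bar y|}\to[0,1]$. Here $\mathbb X(d/\bar y)$ is the team $s(\bar a/\bar y)\mapsto\mathbb X(s)\cdot d(\bar a)$ ($s\in X$, $\bar a\in A^{|\bar y|}$).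
   Context: Probabilistic team semantics. Fix a finite relational vocabulary $\tau$ containing $=$; structures $\mathcal A$ are finite $\tau$-structures with universe $A$. An assignment over a finite set $D$ of first-order variables is a map $s\colon D\to A$; $s(a/x)$ maps $x$ to $a$ and agrees with $s$ elsewhere. A probabilistic team over $D$ is a function $\mathbb X\colon X\to[0,1]$ with $\sum_{s\in X}\mathbb X(s)=1$, where $X$ is a finite set of assignments over $D$ (zero weights allowed); $\mathrm{supp}(\mathbb X)=\{s:\mathbb X(s)\neq0\}$. For a tuple $\bar x$ and $\bar a\in A^{|\bar x|}$, $|\mathbb X_{\bar x=\bar a}|=\sum_{s\in X,\,s(\bar x)=\bar a}\mathbb X(s)$. For $F$ mapping each $t\in X$ to a probability distribution $F(t)$ on $A$, $\mathbb X(F/x)(s(a/x))=\sum_{t\in X,\ t(a/x)=s(a/x)}\mathbb X(t)\,F(t)(a)$; for a tuple $\bar y$ one applies this variable by variable; $\mathbb X(A/x)$ is $\mathbb X(F/x)$ with every $F(t)$ uniform on $A$. For $k\in[0,1]$, $\mathbb Y\sqcup_k\mathbb Z$ is $s\mapsto k\mathbb Y(s)+(1-k)\mathbb Z(s)$. Syntax of $\mathrm{FO}(\perp\!\!\!\perp_c,\sim)$: $\phi::=R(\bar x)\mid\neg R(\bar x)\mid \bar y\perp\!\!\!\perp_{\bar x}\bar z\mid\sim\phi\mid\phi\wedge\phi\mid\phi\vee\phi\mid\exists x\phi\mid\forall x\phi$. Semantics: literals hold in $\mathbb X$ iff every $s\in\mathrm{supp}(\mathbb X)$ satisfies them; $\bar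 y\perp\!\!\!\perp_{\bar x}\bar z$ holds iff $|\mathbb X_{\bar x\bar y=s(\bar x\bar y)}|\cdot|\mathbb X_{\bar x\bar z=s(\bar x\bar z)}|=|\mathbb X_{\bar x\bar y\bar z=s(\bar x\bar y\bar z)}|\cdot|\mathbb X_{\bar x=s(\bar x)}|$ for all $s\colon\mathrm{Var}(\bar x\bar y\bar z)\to A$; the marginal independence atom $\bar x\perp\!\!\!\perp\bar y$ is the case of empty conditioning tuple; $\sim\phi$ holds iff $\phi$ does not; $\wedge$ is classical; $\phi\vee\psi$ holds in $\mathbb X$ iff $\phi$ holds in $\mathbb Y$ and $\psi$ in $\mathbb Z$ for some $\mathbb Y,\mathbb Z,k$ with $\mathbb Y\sqcup_k\mathbb Z=\mathbb X$; $\exists x\phi$ holds in $\mathbb X$ iff $\phi$ holds in $\mathbb X(F/x)$ for some $F$; $\forall x\phi$ holds in $\mathbb X$ iff $\phi$ holds in $\mathbb X(A/x)$. *)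

(* Defs.v *)
From HB Require Import structures.
From mathcomp Require Import all_boot all_order all_algebra.
From mathcomp Require Import reals.
Set Implicit Arguments.
Unset Strict Implicit.
Unset Printing Implicit Defensive.
Import Order.TTheory GRing.Theory Num.Theory.
Local Open Scope ring_scope.

(* A finite relational vocabulary: a finite type of relation symbols with arities.
   Equality '=' is always present, as built-in atoms Eq / NEq below. *)
Record vocab := Vocab { sym : finType; ar : sym -> nat }.

Definition pinterp (tau : vocab) (A : finType) :=
  forall r : sym tau, {set (ar r).-tuple A}.

Inductive pform (tau : vocab) (V : Type) : Type :=
| Rel  (r : sym tau) (xs : (ar r).-tuple V)
| NRel (r : sym tau) (xs : (ar r).-tuple V)
| Eq   (x y : V)
| NEq  (x y : V)
| CInd (x y z : seq V)                               (* y ⫫_x z   *)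
| Neg  of pform tau V
| And  of pform tau V & pform tau V
| Or   of pform tau V & pform tau V
| Ex   of V & pform tau V
| All  of V & pform tau V.

Arguments Rel {tau V}. Arguments NRel {tau V}. Arguments Eq {tau V}.
Arguments NEq {tau V}. Arguments CInd {tau V}. Arguments Neg {tau V}.
Arguments And {tau V}. Arguments Or {tau V}. Arguments Ex {tau V}.
Arguments All {tau V}.

Section Semantics.
Variables (R : realType) (tau : vocab) (V A : finType) (I : pinterp tau A).

(* An assignment over a domain D ⊆ V: x ↦ Some (s x) for x ∈ D, None outside D. *)
Definition asg := {ffun V -> option A}.

Definition adom (s : asg) : {set V} := [set v | s v != None].

Definition upd (s : asg) (x : V) (a : A) : asg :=
  [ffun v => if v == x then Some a else s v].

Definition upds (s : asg) (ys : seq V) (as_ : seq A) : asg :=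
  foldr (fun p t => upd t p.1 p.2) s (zip ys as_).

(* A probabilistic team: an underlying finite set Xs of assignments together with
   weights X : asg -> R (X is 0 outside Xs), nonnegative and summing to 1. *)
Definition is_team (Xs : {set asg}) (X : asg -> R) : Prop :=
  [/\ forall s, 0 <= X s, forall s, s \notin Xs -> X s = 0
    & \sum_(s in Xs) X s = 1].

Definition team_over (D : {set V}) (Xs : {set asg}) (X : asg -> R) : Prop :=
  is_team Xs X /\ forall s, s \in Xs -> adom s = D.

Definition is_dist (T : finType) (d : T -> R) : Prop :=
  (forall t, 0 <= d t) /\ \sum_(t : T) d t = 1.

(* Underlying set and weights of X(F/x). *)
Definition ext_set (Xs : {set asg}) (x : V) : {set asg} :=
  [set upd t x a | t in Xs, a in [set: A]].

Definition ext_w (Xs : {set asg}) (X : asg -> R) (F : asg -> A -> R) (x : V)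
  (u : asg) : R :=
  match u x with
  | Some a => \sum_(t in Xs | upd t x a == u) X t * F t a
  | None => 0
  end.

Definition pmass (Xs : {set asg}) (X : asg -> R) (us : seq V) (g : {ffun V -> A}) : R :=
  \sum_(t in Xs | [seq t u | u <- us] == [seq Some (g u) | u <- us]) X t.

Definition rel_holds (s : asg) (r : sym tau) (xs : (ar r).-tuple V) : Prop :=
  exists as_ : (ar r).-tuple A, [seq s v | v <- xs] = [seq Some a | a <- as_]
                                /\ as_ \in I r.

Definition nrel_holds (s : asg) (r : sym tau) (xs : (ar r).-tuple V) : Prop :=
  exists as_ : (ar r).-tuple A, [seq s v | v <- xs] = [seq Some a | a <- as_]
                                /\ as_ \notin I r.

Fixpoint psat (phi : pform tau V) (Xs : {set asg}) (X : asg -> R) {struct phi} : Prop :=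
  match phi with
  | Rel r xs => forall s, s \in Xs -> X s != 0 -> rel_holds s xs
  | NRel r xs => forall s, s \in Xs -> X s != 0 -> nrel_holds s xs
  | Eq x y => forall s, s \in Xs -> X s != 0 -> s x != None /\ s x = s y
  | NEq x y => forall s, s \in Xs -> X s != 0 ->
                 [/\ s x != None, s y != None & s x != s y]
  | CInd x y z => forall g : {ffun V -> A},
      pmass Xs X (x ++ y) g * pmass Xs X (x ++ z) g
      = pmass Xs X (x ++ y ++ z) g * pmass Xs X x g
  | Neg p => ~ psat p Xs X
  | And p q => psat p Xs X /\ psat q Xs X
  | Or p q => exists (Y Z : asg -> R) (k : R),
      [/\ 0 <= k <= 1, is_team Xs Y, is_team Xs Z &
          (forall s, s \in Xs -> X s = k * Y s + (1 - k) * Z s)]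
      /\ psat p Xs Y /\ psat q Xs Z
  | Ex x p => exists F : asg -> A -> R,
      (forall t, t \in Xs -> is_dist (F t)) /\ psat p (ext_set Xs x) (ext_w Xs X F x)
  | All x p => psat p (ext_set Xs x) (ext_w Xs X (fun _ _ => (#|A|%:R)^-1) x)
  end.

Definition dext_set (Xs : {set asg}) (ys : seq V) : {set asg} :=
  [set upds s ys (tval as_) | s in Xs, as_ in [set: (size ys).-tuple A]].

Definition dext_w (Xs : {set asg}) (X : asg -> R) (ys : seq V)
  (d : (size ys).-tuple A -> R) (u : asg) : R :=
  \sum_(s in Xs) \sum_(as_ : (size ys).-tuple A | upds s ys as_ == u) X s * d as_.

End Semantics.

Fixpoint fv (tau : vocab) (V : eqType) (phi : pform tau V) : seq V :=
  match phi with
  | Rel _ xs | NRel _ xs => tval xs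
  | Eq x y | NEq x y => [:: x; y]
  | CInd x y z => x ++ y ++ z
  | Neg p => fv p
  | And p q | Or p q => fv p ++ fv q
  | Ex x p | All x p => [seq v <- fv p | v != x]
  end.

Definition exs (tau : vocab) (V : Type) (ys : seq V) (p : pform tau V) :=
  foldr Ex p ys.
Definition forallS (tau : vocab) (V : Type) (ys : seq V) (p : pform tau V) :=
  Neg (exs ys (Neg p)).
Definition implS (tau : vocab) (V : Type) (p q : pform tau V) :=
  Neg (And p (Neg q)).

Definition phi_ex (tau : vocab) (V : Type) (xs ys : seq V) (psi : pform tau V) :=
  exs ys (And (CInd [::] xs ys) psi).
Definition phi_all (tau : vocab) (V : Type) (xs ys : seq V) (psi : pform tau V) :=
  forallS ys (implS (CInd [::] xs ys) psi).

(* Main.v *)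
Require Import Defs.
From HB Require Import structures.
From mathcomp Require Import all_boot all_order all_algebra.
From mathcomp Require Import reals.
From Stdlib Require Import Classical.
Set Implicit Arguments. Unset Strict Implicit. Unset Printing Implicit Defensive.
Import Order.TTheory GRing.Theory Num.Theory.
Local Open Scope ring_scope.

Section S.
Variables (R : realType) (tau : vocab) (V A : finType) (I : pinterp tau A).
Local Notation asg := (asg V A).

Lemma sum_tupleS n (f : n.+1.-tuple A -> R) :
  \sum_(t : n.+1.-tuple A) f t = \sum_(a : A) \sum_(t : n.-tuple A) f [tuple of a :: t].
Proof.
rewrite pair_bigA (reindex (fun p : A * n.-tuple A => [tuple of p.1 :: p.2])) //=.
exists (fun t => (thead t, behead_tuple t)).
  by move=> [a t] _; rewrite theadE; f_equal; apply: val_inj.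
by move=> t _; case/tupleP: t => a t; apply: val_inj.
Qed.

Lemma upd_comm (s : asg) x y a b : x != y ->
  upd (upd s x a) y b = upd (upd s y b) x a.
Proof.
move=> nxy; apply/ffunP => v; rewrite !ffunE.
case: (eqVneq v y) => [evy|nvy]; case: (eqVneq v x) => [evx|nvx] //.
by rewrite -evx -evy eqxx in nxy.
Qed.

Lemma upds_out (s : asg) ys (as_ : seq A) v : v \notin ys -> upds s ys as_ v = s v.
Proof.
elim: ys as_ => [|y ys IH] [|a as_] //= ; rewrite inE negb_or => /andP[nvy nvys].
by rewrite /upd ffunE (negbTE nvy) IH.
Qed.

Lemma upds_cons (s : asg) y ys a (as_ : seq A) :
  upds s (y :: ys) (a :: as_) = upd (upds s ys as_) y a.
Proof. by []. Qed.

Lemma upds_map (s : asg) ys (as_ : seq A) : uniq ys -> size as_ = size ys ->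
  map (upds s ys as_) ys = map Some as_.
Proof.
elim: ys as_ => [|y ys IH] [|a as_] //= /andP[nyys uys] [sz].
rewrite /upd ffunE eqxx; congr cons; rewrite -(IH _ uys sz).
apply/eq_in_map => v vys; rewrite ffunE.
by case: (eqVneq v y) => // evy; rewrite -evy vys in nyys.
Qed.

Lemma upds_upd (s : asg) y ys a (as_ : seq A) : y \notin ys ->
  upds (upd s y a) ys as_ = upd (upds s ys as_) y a.
Proof.
elim: ys as_ => [|z ys IH] [|b as_] //; rewrite inE negb_or => /andP[nyz nys].
by rewrite !upds_cons IH // upd_comm // eq_sym.
Qed.

Lemma upds_inj (s s' : asg) ys (as_ as' : seq A) : uniq ys ->
  (forall y, y \in ys -> s y = None) -> (forall y, y \in ys -> s' y = None) ->
  size as_ = size ys -> size as' = size ys ->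
  upds s ys as_ = upds s' ys as' -> s = s' /\ as_ = as'.
Proof.
move=> uys hs hs' sz sz' e; split.
  apply/ffunP => v; case: (boolP (v \in ys)) => vys; first by rewrite hs // hs'.
  by rewrite -(upds_out s as_ vys) -(upds_out s' as' vys) e.
by have := upds_map s uys sz; rewrite e upds_map // => /(inj_map (@Some_inj _)) ->.
Qed.

Lemma upd_inj (s s' : asg) y a a' : s y = None -> s' y = None ->
  upd s y a = upd s' y a' -> s = s' /\ a = a'.
Proof.
move=> hs hs' e; split.
  apply/ffunP => v; case: (eqVneq v y) => [->|nvy]; first by rewrite hs hs'.
  by have := congr1 (fun f : asg => f v) e; rewrite !ffunE (negbTE nvy).
by have := congr1 (fun f : asg => f y) e; rewrite !ffunE eqxx => -[].
Qed.


Definition kext_w (Xs : {set asg}) (X : asg -> R) (ys : seq V)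
  (K : asg -> (size ys).-tuple A -> R) (u : asg) : R :=
  \sum_(s in Xs) \sum_(as_ : (size ys).-tuple A | upds s ys as_ == u) X s * K s as_.

Definition noneOn (Xs : {set asg}) (ys : seq V) :=
  forall s, s \in Xs -> forall y, y \in ys -> s y = None.

Lemma kext_w_upds Xs X ys K s (b : (size ys).-tuple A) : uniq ys -> noneOn Xs ys ->
  s \in Xs -> kext_w Xs X K (upds s ys b) = X s * K s b.
Proof.
move=> uys hN sX; rewrite /kext_w (bigD1 s) //=.
rewrite (big_pred1 b); last first.
  move=> c; apply/eqP/eqP => [e|->] //=.
  have [_ ecb] := upds_inj uys (hN s sX) (hN s sX) (size_tuple c) (size_tuple b) e.
  exact: val_inj.
rewrite [X in _ + X]big1 ?addr0 //.
move=> s' /andP[s'X ns's]; apply: big1 => c /eqP e.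
have [es _] := upds_inj uys (hN s' s'X) (hN s sX) (size_tuple c) (size_tuple b) e.
by rewrite es eqxx in ns's.
Qed.

Lemma ext_w_upd (Xs : {set asg}) (X : asg -> R) (F : asg -> A -> R) (y : V) (s : asg) (a : A) : (forall t, t \in Xs -> t y = None) -> s \in Xs ->
  ext_w Xs X F y (upd s y a) = X s * F s a.
Proof.
move=> hN sX; rewrite /ext_w ffunE eqxx (big_pred1 s) // => t /=.
apply/andP/eqP => [[tX /eqP e]|->]; last by rewrite sX eqxx.
by have [] := upd_inj (hN t tX) (hN s sX) e.
Qed.

Lemma psat_ext (p : pform tau V) : forall (Xs : {set asg}) (X Y : asg -> R), (forall s, s \in Xs -> X s = Y s) ->
  psat I p Xs X <-> psat I p Xs Y.
Proof.
elim: p => [r xs|r xs|x y|x y|x y z|p IH|p IHp q IHq|p IHp q IHq|x p IH|x p IH]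
  Xs X Y e /=.
- by split=> H s sX; [rewrite -e //|rewrite e //]; apply: H.
- by split=> H s sX; [rewrite -e //|rewrite e //]; apply: H.
- by split=> H s sX; [rewrite -e //|rewrite e //]; apply: H.
- by split=> H s sX; [rewrite -e //|rewrite e //]; apply: H.
- have pm : forall us g, pmass Xs X us g = pmass Xs Y us g.
    by move=> us g; apply: eq_bigr => t /andP[tX _]; exact: e.
  by split=> H g; move: (H g); rewrite !pm.
- by have := IH Xs X Y e; tauto.
- by have := IHp Xs X Y e; have := IHq Xs X Y e; tauto.
- split=> -[Y' [Z [k [[hk tY tZ hd] H]]]]; exists Y', Z, k; split=> //; split=> // s sX.
    by rewrite -e // hd.
  by rewrite e // hd.
- have pw : forall F u, u \in ext_set Xs x -> ext_w Xs X F x u = ext_w Xs Y F x u.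
    move=> F u _; rewrite /ext_w; case: (u x) => // a.
    by apply: eq_bigr => t /andP[tX _]; rewrite e.
  split=> -[F [hF H]]; exists F; split=> //.
    by apply/(IH _ _ _ (pw F)).
  by apply/(IH _ _ _ (pw F)).
- have pw : forall F u, u \in ext_set Xs x -> ext_w Xs X F x u = ext_w Xs Y F x u.
    move=> F u _; rewrite /ext_w; case: (u x) => // a.
    by apply: eq_bigr => t /andP[tX _]; rewrite e.
  exact: (IH _ _ _ (pw _)).
Qed.

Lemma psat_tr (p : pform tau V) (Xs : {set asg}) (X Y : asg -> R) :
  psat I p Xs X -> (forall s, s \in Xs -> X s = Y s) -> psat I p Xs Y.
Proof. by move=> H e; apply: (proj1 (psat_ext p e)). Qed.

Lemma sum_dext (Xs : {set asg}) (ys : seq V) (f : asg -> R) : uniq ys -> noneOn Xs ys ->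
  \sum_(t in dext_set Xs ys) f t =
  \sum_(s in Xs) \sum_(b : (size ys).-tuple A) f (upds s ys b).
Proof.
move=> uys hN; rewrite /dext_set curry_imset2X big_imset /=.
  by rewrite pair_big; apply: eq_big => [[s b]|[s b] _]; rewrite ?inE ?andbT.
move=> [s b] [s' b'] /setXP[sX _] /setXP[s'X _] /= e.
have [-> eb] := upds_inj uys (hN s sX) (hN s' s'X) (size_tuple b) (size_tuple b') e.
by congr (_, _); apply: val_inj.
Qed.

Lemma dext_set_nil (Xs : {set asg}) : dext_set Xs [::] = Xs.
Proof.
apply/setP => u; apply/imset2P/idP => [[s b sX _ ->]|uX]; first by move: sX; case: b => -[].
by apply: (@Imset2spec _ _ _ _ _ _ _ u [tuple]).
Qed.

Lemma dext_set_cons (Xs : {set asg}) (y : V) (ys : seq V) : y \notin ys ->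
  dext_set (ext_set Xs y) ys = dext_set Xs (y :: ys).
Proof.
move=> nyys; apply/setP => u; apply/imset2P/imset2P.
  move=> [v b /imset2P[t a tX _ ->] _ ->].
  exists t [tuple of a :: b] => //.
  by rewrite upds_upd.
move=> [t c tX _ ->]; case/tupleP: c => a b.
exists (upd t y a) b => //; last by rewrite upds_upd.
by apply/imset2P; exists t a.
Qed.


Lemma behead_cons n a (t : n.-tuple A) : behead_tuple [tuple of a :: t] = t.
Proof. exact: val_inj. Qed.

Definition rs (y : V) (u : asg) : asg := [ffun v => if v == y then None else u v].

Lemma rs_upd (t : asg) y a : t y = None -> rs y (upd t y a) = t.
Proof.
move=> ht; apply/ffunP => v; rewrite !ffunE.
by case: (eqVneq v y) => [->|].
Qed.

Lemma exs_kernel (p : pform tau V) (ys : seq V) : uniq ys ->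
  forall (Xs : {set asg}) (X : asg -> R), noneOn Xs ys ->
  psat I (exs ys p) Xs X <->
  exists K : asg -> (size ys).-tuple A -> R,
    (forall s, s \in Xs -> is_dist (K s)) /\
    psat I p (dext_set Xs ys) (kext_w Xs X K).
Proof.
elim: ys => [|y ys IH].
  move=> uys Xs X hN /=; rewrite dext_set_nil.
  have e : forall (K : asg -> 0.-tuple A -> R) s, s \in Xs ->
      @kext_w Xs X [::] K s = X s * K s [tuple].
    by move=> K s sX; have := @kext_w_upds Xs X [::] K s [tuple] uys hN sX.
  split=> [H|[K [hK H]]].
    exists (fun _ _ => 1); split.
      by move=> s _; split=> // ; rewrite sumr_const card_tuple expn0.
    by apply: (psat_tr H) => s sX; rewrite e // mulr1.
  apply: (psat_tr H) => s sX; rewrite e //.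
  have [_] := hK s sX; rewrite (big_pred1 [tuple]) => [->|t]; first by rewrite mulr1.
  by apply/esym/eqP; apply: tuple0.
move=> /andP[nyys uys] Xs X hN /=.
have uys' : uniq (y :: ys) by apply/andP.
have hNy : forall t, t \in Xs -> t y = None by move=> t tX; apply: hN => //; exact: mem_head.
have memE : forall t a, t \in Xs -> upd t y a \in ext_set Xs y.
  by move=> t a tX; apply/imset2P; exists t a.
have hN' : noneOn (ext_set Xs y) ys.
  move=> u /imset2P[t a tX _ ->] z zys; rewrite ffunE.
  have nzy : z != y by apply: contraNneq nyys => <-.
  by rewrite (negbTE nzy); apply: hN => //; rewrite inE zys orbT.
rewrite -dext_set_cons //.
split.
  move=> [F [hF H]]; have [K' [hK' H']] := (IH uys _ _ hN').1 H.
  exists (fun s (c : (size ys).+1.-tuple A) =>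
            F s (thead c) * K' (upd s y (thead c)) (behead_tuple c)).
  split.
    move=> s sX; have [F0 F1] := hF s sX; split.
      move=> c; apply: mulr_ge0; first exact: F0.
      by have [] := hK' _ (memE s (thead c) sX).
    rewrite sum_tupleS -F1; apply: eq_bigr => a _.
    under eq_bigr do rewrite theadE behead_cons.
    by rewrite -mulr_sumr; have [_ ->] := hK' _ (memE s a sX); rewrite mulr1.
  apply: (psat_tr H') => u /imset2P[v b /imset2P[t a tX _ ->] _ ->].
  rewrite (kext_w_upds _ _ _ uys hN' (memE t a tX)) (ext_w_upd _ _ _ hNy tX).
  rewrite upds_upd //.
  rewrite (@kext_w_upds Xs X (y :: ys) _ t [tuple of a :: b] uys' hN tX) /=.
  by rewrite theadE behead_cons mulrA.
move=> [K [hK H]].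
pose F s a := \sum_(b : (size ys).-tuple A) K s [tuple of a :: b].
pose K' (u : asg) (b : (size ys).-tuple A) :=
  match u y with
  | Some a => if F (rs y u) a == 0 then (#|{: (size ys).-tuple A}|%:R)^-1
              else K (rs y u) [tuple of a :: b] / F (rs y u) a
  | None => 0
  end.
have F0 : forall s a, s \in Xs -> 0 <= F s a.
  by move=> s a sX; apply: sumr_ge0 => b _; have [] := hK s sX.
have K'E : forall t a b, t \in Xs -> K' (upd t y a) b =
    if F t a == 0 then (#|{: (size ys).-tuple A}|%:R)^-1
    else K t [tuple of a :: b] / F t a.
  by move=> t a b tX; rewrite /K' ffunE eqxx rs_upd // hNy.
exists F; split.
  move=> s sX; split; first by move=> a; exact: F0.
  by have [_ <-] := hK s sX; rewrite sum_tupleS.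
apply: (IH uys _ _ hN').2; exists K'; split.
  move=> u /imset2P[t a tX _ ->].
  have cpos : (#|{: (size ys).-tuple A}|%:R : R) != 0.
    rewrite pnatr_eq0 -lt0n card_tuple expn_gt0; apply/orP; left.
    by apply/card_gt0P; exists a.
  case: (eqVneq (F t a) 0) => [Fz|Fnz]; split.
  - by move=> b; rewrite K'E // Fz eqxx invr_ge0 ler0n.
  - by under eq_bigr do rewrite K'E // Fz eqxx; rewrite sumr_const -(mulr_natr _ #|xpredT|) mulVf.
  - move=> b; rewrite K'E // (negbTE Fnz); apply: divr_ge0; last exact: F0.
    by have [] := hK t tX.
  - under eq_bigr do rewrite K'E // (negbTE Fnz).
    by rewrite -mulr_suml divff.
apply: (psat_tr H) => u /imset2P[v b /imset2P[t a tX _ ->] _ ->].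
rewrite (kext_w_upds _ _ _ uys hN' (memE t a tX)) (ext_w_upd _ _ _ hNy tX).
rewrite upds_upd // (@kext_w_upds Xs X (y :: ys) _ t [tuple of a :: b] uys' hN tX).
rewrite K'E //; case: (eqVneq (F t a) 0) => [Fz|Fnz].
  have Kz : K t [tuple of a :: b] = 0.
    have hp : forall b' : (size ys).-tuple A, true -> 0 <= K t [tuple of a :: b'].
      by move=> b' _; have [] := hK t tX.
    exact: (psumr_eq0P hp Fz).
  by rewrite Kz Fz !mulr0 mul0r.
by rewrite -mulrA [F t a * _]mulrC -mulrA mulVf ?mulr1.
Qed.

Lemma map_nth_index (a0 : A) (ys : seq V) (bs : seq A) : uniq ys -> size bs = size ys ->
  map (fun v => nth a0 bs (index v ys)) ys = bs.
Proof.
elim: ys bs => [|y ys IH] [|b bs] //= /andP[nyys uys] [sz].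
rewrite eqxx /=; congr cons; rewrite -[RHS](IH bs uys sz).
apply/eq_in_map => v vys /=; case: (eqVneq y v) => [evy|] //.
by rewrite evy vys in nyys.
Qed.

Lemma pm_formula (Xs : {set asg}) (X : asg -> R) (ys : seq V)
  (K : asg -> (size ys).-tuple A -> R) (P : pred asg) : uniq ys -> noneOn Xs ys ->
  \sum_(t in dext_set Xs ys | P t) kext_w Xs X K t =
  \sum_(s in Xs) \sum_(b : (size ys).-tuple A)
     (if P (upds s ys b) then X s * K s b else 0).
Proof.
move=> uys hN; rewrite big_mkcondr sum_dext //; apply: eq_bigr => s sX.
by apply: eq_bigr => b _; rewrite kext_w_upds.
Qed.

Section CI.
Variables (xs ys : seq V) (Xs : {set asg}) (X : asg -> R).
Hypotheses (uys : uniq ys) (disj : all (fun y => y \notin xs) ys)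
  (team : is_team Xs X) (dom : forall s, s \in Xs -> adom s = [set x in xs]).

Lemma noneXs : noneOn Xs ys.
Proof.
move=> s sX y yys; have nyx : y \notin xs by exact: (allP disj).
have : y \notin adom s by rewrite dom // inE.
by rewrite inE negbK => /eqP.
Qed.

Lemma map_upds_xs s (b : seq A) : map (upds s ys b) xs = map s xs.
Proof.
apply/eq_in_map => x xxs; apply: upds_out.
by apply: contraL xxs => xys; exact: (allP disj).
Qed.

Lemma s_uniq s s' : s \in Xs -> s' \in Xs -> map s xs = map s' xs -> s = s'.
Proof.
move=> sX s'X /eq_in_map e; apply/ffunP => v.
case: (boolP (v \in xs)) => vxs; first exact: e.
have h : forall t, t \in Xs -> t v = None.
  move=> t tX; have : v \notin adom t by rewrite dom // inE.
  by rewrite inE negbK => /eqP.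
by rewrite !h.
Qed.

Lemma eqSome (b b0 : (size ys).-tuple A) : (map Some b == map Some b0) = (b == b0).
Proof. by rewrite (inj_eq (inj_map (@Some_inj _))). Qed.

Lemma E1 (K : asg -> (size ys).-tuple A -> R) s0 :
  (forall s, s \in Xs -> is_dist (K s)) -> s0 \in Xs ->
  \sum_(s in Xs) \sum_(b : (size ys).-tuple A)
     (if map (upds s ys b) xs == map s0 xs then X s * K s b else 0) = X s0.
Proof.
move=> hK s0X; rewrite (bigD1 s0) //= [Z in _ + Z]big1 ?addr0.
  under eq_bigr do rewrite map_upds_xs eqxx.
  by rewrite -mulr_sumr; have [_ ->] := hK s0 s0X; rewrite mulr1.
move=> s /andP[sX ns]; apply: big1 => b _; rewrite map_upds_xs.
case: eqP => // e; by rewrite (s_uniq sX s0X e) eqxx in ns.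
Qed.

Lemma E2 (K : asg -> (size ys).-tuple A -> R) (b0 : (size ys).-tuple A) :
  \sum_(s in Xs) \sum_(b : (size ys).-tuple A)
     (if map (upds s ys b) ys == map Some b0 then X s * K s b else 0) =
  \sum_(s in Xs) X s * K s b0.
Proof.
apply: eq_bigr => s sX; rewrite (bigD1 b0) //= [Z in _ + Z]big1 ?addr0.
  by rewrite upds_map ?size_tuple // eqxx.
by move=> b nb; rewrite upds_map ?size_tuple // eqSome (negbTE nb).
Qed.

Lemma E3 (K : asg -> (size ys).-tuple A -> R) s0 (b0 : (size ys).-tuple A) : s0 \in Xs ->
  \sum_(s in Xs) \sum_(b : (size ys).-tuple A)
     (if map (upds s ys b) (xs ++ ys) == map s0 xs ++ map Some b0
      then X s * K s b else 0) = X s0 * K s0 b0.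
Proof.
move=> s0X.
have e : forall s (b : (size ys).-tuple A),
    (map (upds s ys b) (xs ++ ys) == map s0 xs ++ map Some b0) =
    (map s xs == map s0 xs) && (b == b0).
  move=> s b; rewrite map_cat eqseq_cat ?size_map // map_upds_xs.
  by rewrite upds_map ?size_tuple // eqSome.
under eq_bigr do under eq_bigr do rewrite e.
rewrite (bigD1 s0) //= [Z in _ + Z]big1 ?addr0.
  rewrite (bigD1 b0) //= !eqxx [Z in _ + Z]big1 ?addr0 //.
  by move=> b nb; rewrite ?eqxx (negbTE nb) ?andbF.
move=> s /andP[sX ns]; apply: big1 => b _.
case: eqP => //= es; by rewrite (s_uniq sX s0X es) eqxx in ns.
Qed.

Lemma E4 (K : asg -> (size ys).-tuple A -> R) :
  (forall s, s \in Xs -> is_dist (K s)) ->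
  \sum_(s in Xs) \sum_(b : (size ys).-tuple A) X s * K s b = 1.
Proof.
move=> hK; have [_ _ <-] := team; apply: eq_bigr => s sX.
by rewrite -mulr_sumr; have [_ ->] := hK s sX; rewrite mulr1.
Qed.

Lemma cind_fwd (K : asg -> (size ys).-tuple A -> R) :
  (forall s, s \in Xs -> is_dist (K s)) ->
  psat I (CInd [::] xs ys) (dext_set Xs ys) (kext_w Xs X K) ->
  forall s0 (b0 : (size ys).-tuple A), s0 \in Xs ->
    X s0 * K s0 b0 = X s0 * \sum_(s in Xs) X s * K s b0.
Proof.
move=> hK H s0 b0 s0X.
have [X0 Xout Xsum] := team.
case: (pickP (@predT A)) => [a0 _ | A0]; last first.
  have sz : size ys = 0%N.
    rewrite -(size_tuple b0); case: (tval b0) => [|a l] //.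
    by have := A0 a.
  have K1 : forall s b, s \in Xs -> K s b = 1.
    move=> s b sX; have [_ <-] := hK s sX; rewrite (big_pred1 b) // => t /=.
    apply/esym/eqP/val_inj.
    have st : size t = 0%N by rewrite size_tuple.
    have sb : size b = 0%N by rewrite size_tuple.
    change (tval t = tval b); by rewrite (size0nil st) (size0nil sb).
  rewrite K1 //; under eq_bigr => s sX do rewrite K1 // mulr1.
  by rewrite Xsum.
pose g := [ffun v => if v \in ys then nth a0 b0 (index v ys) else odflt a0 (s0 v)].
have gxs : [seq Some (g u) | u <- xs] = map s0 xs.
  apply/eq_in_map => x xxs /=; rewrite ffunE.
  have -> : (x \in ys) = false.
    by apply/negbTE; apply: contraL xxs => xys; exact: (allP disj).
  have : x \in adom s0 by rewrite dom // inE.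
  by rewrite inE; case: (s0 x).
have gys : [seq Some (g u) | u <- ys] = map Some b0.
  rewrite -[in RHS](map_nth_index a0 uys (size_tuple b0)) -map_comp.
  by apply/eq_in_map => v vys /=; rewrite ffunE vys.
have hN := noneXs.
have := H g; rewrite /pmass /= !pm_formula //.
rewrite [[seq Some (g u) | u <- xs ++ ys]]map_cat gxs gys eqxx /=.
rewrite E1 // E2 E3 // E4 // mulr1 => ->.
by [].
Qed.
Lemma factor (d : (size ys).-tuple A -> R) (P : pred asg) (Q : pred ((size ys).-tuple A)) :
  \sum_(s in Xs) \sum_(b : (size ys).-tuple A) (if P s && Q b then X s * d b else 0) =
  (\sum_(s in Xs) (if P s then X s else 0)) * \sum_(b : (size ys).-tuple A) (if Q b then d b else 0).
Proof.
rewrite big_distrl; apply: eq_bigr => s _; rewrite big_distrr; apply: eq_bigr => b _.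
by case: (P s); case: (Q b); rewrite /= ?mul0r ?mulr0.
Qed.

Lemma cind_const (d : (size ys).-tuple A -> R) : is_dist d ->
  psat I (CInd [::] xs ys) (dext_set Xs ys) (kext_w Xs X (fun _ => d)).
Proof.
move=> [d0 d1] g; have hN := noneXs; have [X0 Xout Xsum] := team.
rewrite /pmass /= !pm_formula //.
rewrite [[seq Some (g u) | u <- xs ++ ys]]map_cat.
set gX := [seq Some (g u) | u <- xs]; set gY := [seq Some (g u) | u <- ys].
have e1 : forall s (b : (size ys).-tuple A), (map (upds s ys b) xs == gX) = (map s xs == gX) && true.
  by move=> s b; rewrite map_upds_xs andbT.
have e2 : forall s (b : (size ys).-tuple A), (map (upds s ys b) ys == gY) = true && (map Some b == gY).
  by move=> s b; rewrite upds_map ?size_tuple.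
have e3 : forall s (b : (size ys).-tuple A), (map (upds s ys b) (xs ++ ys) == gX ++ gY) =
    (map s xs == gX) && (map Some b == gY).
  move=> s b; rewrite map_cat eqseq_cat ?size_map // map_upds_xs.
  by rewrite upds_map ?size_tuple.
have e4 : forall s (b : (size ys).-tuple A), ([::] == [::] :> seq (option A)) = true && true.
  by [].
under eq_bigr do under eq_bigr do rewrite e1.
under [in X in _ * X = _]eq_bigr do under eq_bigr do rewrite e2.
under [in X in _ = X * _]eq_bigr do under eq_bigr do rewrite e3.
rewrite eqxx /= (E4 (K := fun _ => d) (fun _ _ => conj d0 d1)) mulr1.
rewrite !factor d1 mulr1; congr (_ * _).
rewrite exchange_big; apply: eq_bigr => b _; case: ifP => _.
  by rewrite -mulr_suml Xsum mul1r.
by rewrite big1.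
Qed.

End CI.


Lemma main_aux (xs ys : seq V) (psi : pform tau V) (Xs : {set asg}) (X : asg -> R) :
  uniq xs -> uniq ys -> all (fun y => y \notin xs) ys ->
  {subset fv psi <= xs ++ ys} ->
  team_over [set x in xs] Xs X ->
  (psat I (phi_ex xs ys psi) Xs X <->
     exists d : (size ys).-tuple A -> R,
       is_dist d /\ psat I psi (dext_set Xs ys) (dext_w Xs X d)) /\
  (psat I (phi_all xs ys psi) Xs X <->
     forall d : (size ys).-tuple A -> R,
       is_dist d -> psat I psi (dext_set Xs ys) (dext_w Xs X d)).
Proof.
move=> uxs uys disj _ [team dom].
have hN := noneXs disj dom.
pose dK (K : asg -> (size ys).-tuple A -> R) b := \sum_(s in Xs) X s * K s b.
have dKdist : forall K, (forall s, s \in Xs -> is_dist (K s)) -> is_dist (dK K).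
  move=> K hK; have [X0 _ Xsum] := team; split.
    move=> b; apply: sumr_ge0 => s sX; apply: mulr_ge0 => //.
    by have [] := hK s sX.
  by rewrite /dK exchange_big -(E4 team hK).
have dk : forall d u, dext_w Xs X d u = kext_w Xs X (fun _ => d) u by [].
have transfer : forall K, (forall s, s \in Xs -> is_dist (K s)) ->
    psat I (CInd [::] xs ys) (dext_set Xs ys) (kext_w Xs X K) ->
    forall q, psat I q (dext_set Xs ys) (kext_w Xs X K) <->
              psat I q (dext_set Xs ys) (dext_w Xs X (dK K)).
  move=> K hK hC q; apply: psat_ext => u /imset2P[s b sX _ ->].
  rewrite dk (kext_w_upds X K b uys hN sX) (kext_w_upds X (fun _ => dK K) b uys hN sX).
  exact: (cind_fwd uys disj team dom hK hC b sX).
split.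
  rewrite /phi_ex (exs_kernel _ uys _ hN); split.
    move=> [K [hK [hC hpsi]]]; exists (dK K); split; first exact: dKdist.
    by apply/(transfer K hK hC).
  move=> [d [hd hpsi]]; exists (fun _ => d); split; first by move=> ? _.
  by split; first exact: (cind_const uys disj team dom hd).
rewrite /phi_all /forallS /implS /= (exs_kernel _ uys _ hN); split.
  move=> H d hd; apply: NNPP => npsi; apply: H; exists (fun _ => d).
  split; first by move=> ? _.
  move=> /= nn; apply: nn; split; last exact: npsi.
  exact: (cind_const uys disj team dom hd).
move=> H [K [hK hnn]]; apply: hnn => -[hC hnpsi]; apply: hnpsi.
by apply/(transfer K hK hC); apply: H; exact: dKdist.
Qed.
End S.

Unset Implicit Arguments.

Theorem mainTheorem5 (R : realType) (tau : vocab) (V A : finType) (I : pinterp tau A)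
  (xs ys : seq V) (psi : pform tau V) (Xs : {set asg V A}) (X : asg V A -> R) :
  uniq xs -> uniq ys -> all (fun y => y \notin xs) ys ->
  {subset fv psi <= xs ++ ys} ->
  team_over [set x in xs] Xs X ->
  (psat I (phi_ex xs ys psi) Xs X <->
     exists d : (size ys).-tuple A -> R,
       is_dist d /\ psat I psi (dext_set Xs ys) (dext_w Xs X d)) /\
  (psat I (phi_all xs ys psi) Xs X <->
     forall d : (size ys).-tuple A -> R,
       is_dist d -> psat I psi (dext_set Xs ys) (dext_w Xs X d)).
Proof. exact: main_aux. Qed.
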